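(* Let $n\geq 2$, let $p$ be a prime, let $x$ be a point of Culler--Vogtmann outer space $CV_n$, let $N$ be a normal subgroup of $F_n$ of index $p$, and let $A\le\mathrm{Out}(F_n)$ be the (finite index) subgroup preserving $N$ and each of its cosets. Then the following three sets are finite and have the same cardinality: (a) the set of $A$-orbits of points in the $\mathrm{Out}(F_n)$-orbit of $x$; (b) the set of $\mathrm{Out}(F_n)_x$-orbits of pairs $(N',tN')$, where $N'$ is an index $p$ normal subgroup of $F_n$ and $tN'\neq N'$ is a coset of it; (c) the set of $\mathrm{Out}(F_n)_x$-orbits of non-trivial homomorphisms $F_n\to\mathbb{Z}/p$.
   Context: $\mathrm{Out}(F_n)$ acts on $CV_n$ on the right; $\mathrm{Out}(F_n)_x$ denotes the stabiliser of $x$. Since an index $p$ normal subgroup $N'$ has abelian quotient, inner automorphisms preserve $N'$ and each of its cosets, so $\mathrm{Out}(F_n)$ acts on such pairs $(N',tN')$ (via $\varphi\cdot(N',tN')=(\varphi^{-1}(N'),\varphi^{-1}(tN'))$) and on homomorphisms $F_n\to\mathbb{Z}/p$ by precomposition. *)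

(* Defs.v *)
From Stdlib Require Import Reals.
From mathcomp Require Import all_boot.
From mathcomp Require Import zmodp.

Set Implicit Arguments.
Unset Strict Implicit.
Unset Printing Implicit Defensive.

Section Words.
Variables (E : eqType) (inv : E -> E).

Definition red_cons (e : E) (s : seq E) : seq E :=
  match s with
  | e' :: s' => if e' == inv e then s' else e :: s
  | [::] => [:: e]
  end.

Definition reduce (s : seq E) : seq E := foldr red_cons [::] s.

Definition reducedb (s : seq E) : bool :=
  if s is e :: s' then path (fun a b => b != inv a) e s' else true.

Definition winv (s : seq E) : seq E := rev (map inv s).
End Words.

Definition letter (n : nat) := ('I_n * bool)%type.
Definition linv n (l : letter n) : letter n := (l.1, ~~ l.2).

Definition Fn (n : nat) := {w : seq (letter n) | reducedb (@linv n) w}.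

Definition Fone n : Fn n := exist _ [::] (erefl true).
Definition Fmul n (a b : Fn n) : Fn n :=
  insubd (Fone n) (reduce (@linv n) (val a ++ val b)).
Definition Finv n (a : Fn n) : Fn n :=
  insubd (Fone n) (winv (@linv n) (val a)).

(* automorphisms of F_n (representatives of elements of Out(F_n)) *)
Definition is_aut n (phi : Fn n -> Fn n) : Prop :=
  (forall a b, phi (Fmul a b) = Fmul (phi a) (phi b)) /\ bijective phi.

Definition is_normal n (N : Fn n -> Prop) : Prop :=
  [/\ N (Fone n),
      (forall a b, N a -> N b -> N (Fmul a b)),
      (forall a, N a -> N (Finv a)) &
      (forall g a, N a -> N (Fmul (Fmul g a) (Finv g)))].

(* "S/r has exactly k classes": a complete irredundant system of k
   representatives of the relation r on the set S *)
Definition num_classes (X : Type) (S : X -> Prop) (r : X -> X -> Prop) (k : nat)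
  : Prop :=
  exists rep : 'I_k -> X,
    [/\ (forall i, S (rep i)),
        (forall i j, r (rep i) (rep j) -> i = j) &
        (forall y, S y -> exists i, r y (rep i))].

Definition has_index n (N : Fn n -> Prop) (k : nat) : Prop :=
  num_classes (fun _ : Fn n => True) (fun a b => N (Fmul (Finv a) b)) k.

Definition is_coset n (N C : Fn n -> Prop) : Prop :=
  exists t, forall w, C w <-> N (Fmul (Finv t) w).

(* ---------- Finite graphs (Serre style: oriented edges with involution) *)
Record graph := Graph {
  gV : finType;
  gE : finType;
  ginv : gE -> gE;
  gorg : gE -> gV }.

Definition gter (G : graph) (e : gE G) : gV G := gorg (ginv e).

Definition is_path (G : graph) (v w : gV G) (s : seq (gE G)) : bool :=
  match s with
  | [::] => v == w
  | e :: s' => [&& gorg e == v,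
                  path (fun a b => gorg b == gter a) e s' &
                  gter (last e s') == w]
  end.

(* reduced loops at v: the elements of pi_1(G, v) *)
Definition is_rloop (G : graph) (v : gV G) (s : seq (gE G)) : bool :=
  is_path v v s && reducedb (@ginv G) s.

Record mgraph (n : nat) := MG {
  mG : graph;
  mbase : gV mG;
  mmark : Fn n -> seq (gE mG);   (* marking, as the induced map on pi_1 *)
  mlen : gE mG -> R }.
Arguments mG {n} m.
Arguments mbase {n} m.
Arguments mmark {n} m _.
Arguments mlen {n} m _.

Definition is_cv_point n (x : mgraph n) : Prop :=
  let G := mG x in
  [/\ (forall e : gE G, ginv (ginv e) = e /\ ginv e != e),
      (forall v w : gV G, exists s, is_path v w s),
      (forall v : gV G, 3 <= #|[pred e : gE G | gorg e == v]|),
      ((forall e : gE G, Rlt R0 (mlen x e) /\ mlen x (ginv e) = mlen x e) /\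
      (\big[Rplus/R0]_(e : gE G) mlen x e = IZR 2%Z)
        (* each geometric edge counted twice: total volume 1 *)) &
      [/\ (forall w, is_rloop (mbase x) (mmark x w)),
          (forall a b, mmark x (Fmul a b)
                       = reduce (@ginv G) (mmark x a ++ mmark x b)),
          injective (mmark x) &
          (forall s, is_rloop (mbase x) s -> exists w, mmark x w = s)]].

(* equivalence of marked metric graphs: an isometry h with h o m_x freely
   homotopic to m_y, i.e. equal on pi_1 up to a change-of-basepoint path *)
Definition mg_equiv n (x y : mgraph n) : Prop :=
  exists (hV : gV (mG x) -> gV (mG y)) (hE : gE (mG x) -> gE (mG y))
         (gam : seq (gE (mG y))),
    [/\ bijective hV /\ bijective hE,
        (forall e, gorg (hE e) = hV (gorg e) /\ hE (ginv e) = ginv (hE e)),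
        (forall e, mlen y (hE e) = mlen x e),
        is_path (mbase y) (hV (mbase x)) gam &
        (forall w, mmark y w
           = reduce (@ginv (mG y)) (gam ++ map hE (mmark x w)
                                        ++ winv (@ginv (mG y)) gam))].

Definition cv_act n (x : mgraph n) (phi : Fn n -> Fn n) : mgraph n :=
  @MG n (mG x) (mbase x) (fun w => mmark x (phi w)) (mlen x).

Definition in_stab n (x : mgraph n) (phi : Fn n -> Fn n) : Prop :=
  is_aut phi /\ mg_equiv (cv_act x phi) x.

Definition in_A n (N : Fn n -> Prop) (phi : Fn n -> Fn n) : Prop :=
  is_aut phi /\
  (forall t w, N (Fmul (Finv t) (phi w)) <-> N (Fmul (Finv t) w)).

Definition is_Zp_hom n p (f : Fn n -> 'Z_p) : Prop :=
  forall a b, f (Fmul a b) = (f a + f b)%R.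

(* Main.v *)
Require Import Defs.
From Stdlib Require Import Reals.
From mathcomp Require Import all_boot.
From mathcomp Require Import zmodp ssralg.
From mathcomp Require Import fingroup perm action cyclic.
From Stdlib Require Import Classical ClassicalEpsilon FunctionalExtensionality.
Import GRing.Theory.

Set Implicit Arguments.
Unset Strict Implicit.
Unset Printing Implicit Defensive.

Section WordsTh.
Variables (E : eqType) (inv : E -> E).
Hypothesis invK : involutive inv.

Local Notation rc := (@red_cons E inv).
Local Notation red := (@reduce E inv).
Local Notation rdb := (@reducedb E inv).

Lemma rdb_cons e s : rdb (e :: s) = (if s is e' :: _ then e' != inv e else true) && rdb s.
Proof. by case: s. Qed.
Arguments reducedb : simpl never.

Lemma rdb_rc e s : rdb s -> rdb (rc e s).
Proof.
case: s => [|e' s] // H; rewrite /red_cons; case: ifP => Hc.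
- by move: H; rewrite (rdb_cons e') => /andP[].
- by rewrite (rdb_cons e) Hc H.
Qed.

Lemma rdb_red s : rdb (red s).
Proof. by elim: s => //= e s IH; apply: rdb_rc. Qed.

Lemma rc_id e s : rdb (e :: s) -> rc e s = e :: s.
Proof. by case: s => //= e' s; rewrite (rdb_cons e) => /andP[/negPf -> _]. Qed.

Lemma red_id s : rdb s -> red s = s.
Proof.
elim: s => //= e s IH H.
have Hs : rdb s by move: H; rewrite rdb_cons => /andP[].
by rewrite IH // rc_id.
Qed.

Lemma rc_cancel e u : rdb u -> rc (inv e) (rc e u) = u.
Proof.
case: u => [|e' u] /=; first by rewrite invK eqxx.
case: ifP => [/eqP He'|Hne] H.
- subst e'; move: H; rewrite rdb_cons => /andP[H1 H2].
  by rewrite rc_id // rdb_cons H2 andbT.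
- by rewrite /red_cons invK eqxx.
Qed.



Lemma rc_cancel' e u : rdb u -> rc e (rc (inv e) u) = u.
Proof. by move=> H; rewrite -{1}(invK e) rc_cancel. Qed.

Definition act (s u : seq E) := foldr rc u s.

Lemma rdb_act s u : rdb u -> rdb (act s u).
Proof. by elim: s => //= e s IH H; apply: rdb_rc; apply: IH. Qed.

Lemma act_rc e r u : rdb r -> rdb u -> act (rc e r) u = rc e (act r u).
Proof.
case: r => [|e' r] //= Hr Hu; case: ifP => [/eqP ->|] //=.
by rewrite rc_cancel' // rdb_act // ; move: Hr; rewrite rdb_cons => /andP[].
Qed.

Lemma act_red s u : rdb u -> act s u = act (red s) u.
Proof.
move=> Hu; elim: s => //= e s IH.
by rewrite IH act_rc // rdb_red.
Qed.

Lemma red_cat s t : red (s ++ t) = act s (red t).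
Proof. by rewrite /reduce foldr_cat. Qed.

Lemma red_catl s t : red (red s ++ t) = red (s ++ t).
Proof. by rewrite !red_cat -act_red // rdb_red. Qed.

Lemma red_catr s t : red (s ++ red t) = red (s ++ t).
Proof. by rewrite !red_cat red_id // rdb_red. Qed.

Lemma red_red s : red (red s) = red s.
Proof. by rewrite red_id // rdb_red. Qed.

Lemma winv_cons e s : winv inv (e :: s) = rcons (winv inv s) (inv e).
Proof. by rewrite /winv /= rev_cons. Qed.

Lemma winv_cat s t : winv inv (s ++ t) = winv inv t ++ winv inv s.
Proof. by rewrite /winv map_cat rev_cat. Qed.

Lemma winvK : involutive (winv inv).
Proof. by move=> s; rewrite /winv map_rev revK -map_comp (eq_map invK) map_id. Qed.

Lemma act_cat s t u : act (s ++ t) u = act s (act t u).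
Proof. by rewrite /act foldr_cat. Qed.

Lemma act_winv s u : rdb u -> act (winv inv s) (act s u) = u.
Proof.
elim: s u => //= e s IH u Hu.
rewrite winv_cons -cats1 act_cat /= rc_cancel ?IH //.
by apply: rdb_act.
Qed.

Lemma act_winv' s u : rdb u -> act s (act (winv inv s) u) = u.
Proof. by move=> H; rewrite -{1}(winvK s) act_winv. Qed.

Lemma red_winvK s t : red (winv inv s ++ s ++ t) = red t.
Proof. by rewrite red_cat red_cat act_winv // rdb_red. Qed.

Lemma red_winvK' s t : red (s ++ winv inv s ++ t) = red t.
Proof. by rewrite -{1}(winvK s) red_winvK. Qed.

Lemma rdb_path e s : rdb (e :: s) = path (fun a b => b != inv a) e s.
Proof. by []. Qed.

Lemma rdb_winv s : rdb s -> rdb (winv inv s).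
Proof.
have Hl : forall s e, last e (winv inv s) = if s is e' :: _ then inv e' else e.
  by move=> {}s e; case: s => //= e' s'; rewrite winv_cons last_rcons.
elim: s => //= e s IH.
rewrite rdb_cons winv_cons => /andP[Hh Hs].
case Ew: (winv inv s) => [|f g].
  by [].
have := IH Hs; rewrite Ew /= !rdb_path rcons_path => -> /=.
have := Hl s f; rewrite Ew /= => ->.
clear IH Hs; case: s Hh Ew => //= e' s' Hh _.
by rewrite invK; apply: contra Hh => /eqP <-.
Qed.

End WordsTh.

Section MapRed.
Variables (E1 E2 : eqType) (inv1 : E1 -> E1) (inv2 : E2 -> E2) (h : E1 -> E2).
Hypothesis hinj : injective h.
Hypothesis hinv : forall e, h (inv1 e) = inv2 (h e).

Lemma map_rc e s : map h (red_cons inv1 e s) = red_cons inv2 (h e) (map h s).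
Proof.
case: s => //= e' s; rewrite -hinv inj_eq //.
by case: ifP.
Qed.

Lemma map_red s : map h (reduce inv1 s) = reduce inv2 (map h s).
Proof. by elim: s => //= e s <-; rewrite map_rc. Qed.

Lemma map_winv s : map h (winv inv1 s) = winv inv2 (map h s).
Proof. by rewrite /winv map_rev -!map_comp; congr rev; apply: eq_map => e /=. Qed.
End MapRed.

Section FreeGroup.
Variable n : nat.
Local Notation F := (Fn n).
Local Notation red := (reduce (@linv n)).
Local Notation rdb := (reducedb (@linv n)).
Local Notation winv := (winv (@linv n)).

Lemma linvK : involutive (@linv n).
Proof. by case=> a b; rewrite /linv /= negbK. Qed.

Lemma Fn_inj (a b : F) : sval a = sval b -> a = b.
Proof.
case: a => a Ha; case: b => b Hb /= E; subst b.
by rewrite (bool_irrelevance Ha Hb).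
Qed.

Lemma Fn_rdb (a : F) : rdb (sval a).
Proof. by case: a. Qed.

Lemma valFmul (a b : F) : sval (Fmul a b) = red (sval a ++ sval b).
Proof. by rewrite /Fmul insubdK //; apply: rdb_red. Qed.

Lemma valFinv (a : F) : sval (Finv a) = winv (sval a).
Proof. by rewrite /Finv insubdK //; apply: rdb_winv; [apply: linvK | apply: Fn_rdb]. Qed.

Lemma valFone : sval (Fone n) = [::].
Proof. by []. Qed.

Lemma FmulA (a b c : F) : Fmul (Fmul a b) c = Fmul a (Fmul b c).
Proof.
apply: Fn_inj; rewrite !valFmul red_catl ?red_catr ?catA //; exact: linvK.
Qed.

Lemma Fmul1 (a : F) : Fmul (Fone n) a = a.
Proof. by apply: Fn_inj; rewrite valFmul /= red_id //; apply: Fn_rdb. Qed.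

Lemma Fmul1r (a : F) : Fmul a (Fone n) = a.
Proof. by apply: Fn_inj; rewrite valFmul /= cats0 red_id //; apply: Fn_rdb. Qed.

Lemma FmulV (a : F) : Fmul (Finv a) a = Fone n.
Proof.
apply: Fn_inj; rewrite valFmul valFinv.
by have := red_winvK linvK (sval a) [::]; rewrite cats0 => ->.
Qed.

Lemma FmulVr (a : F) : Fmul a (Finv a) = Fone n.
Proof.
apply: Fn_inj; rewrite valFmul valFinv.
by have := red_winvK' linvK (sval a) [::]; rewrite cats0 => ->.
Qed.

Lemma FmulKV (a b : F) : Fmul (Finv a) (Fmul a b) = b.
Proof. by rewrite -FmulA FmulV Fmul1. Qed.

Lemma FmulK (a b : F) : Fmul a (Fmul (Finv a) b) = b.
Proof. by rewrite -FmulA FmulVr Fmul1. Qed.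

Lemma FmulKr (a b : F) : Fmul (Fmul b a) (Finv a) = b.
Proof. by rewrite FmulA FmulVr Fmul1r. Qed.

Lemma FmulKVr (a b : F) : Fmul (Fmul b (Finv a)) a = b.
Proof. by rewrite FmulA FmulV Fmul1r. Qed.

Lemma Fmul_injl (a b c : F) : Fmul a b = Fmul a c -> b = c.
Proof. by move=> H; rewrite -(FmulKV a b) H FmulKV. Qed.

Lemma Fmul_injr (a b c : F) : Fmul b a = Fmul c a -> b = c.
Proof. by move=> H; rewrite -(FmulKr a b) H FmulKr. Qed.

Lemma FinvK (a : F) : Finv (Finv a) = a.
Proof. by apply: (@Fmul_injl (Finv a)); rewrite FmulVr FmulV. Qed.

Lemma Finv_mul (a b : F) : Finv (Fmul a b) = Fmul (Finv b) (Finv a).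
Proof.
apply: (@Fmul_injl (Fmul a b)); rewrite FmulVr FmulA FmulK FmulVr //.
Qed.

Lemma Finv1 : Finv (Fone n) = Fone n.
Proof. by apply: (@Fmul_injl (Fone n)); rewrite FmulVr Fmul1. Qed.

Lemma Finv_eq1 (a b : F) : Fmul a b = Fone n -> b = Finv a.
Proof. by move=> H; apply: (@Fmul_injl a); rewrite H FmulVr. Qed.

End FreeGroup.

Section Homs.
Variable n : nat.
Local Notation F := (Fn n).
Local Notation red := (reduce (@linv n)).
Local Notation rdb := (reducedb (@linv n)).

Definition lt (l : letter n) : F := exist _ [:: l] (erefl true).
Definition gen (i : 'I_n) : F := lt (i, true).

Lemma lt_false i : lt (i, false) = Finv (gen i).
Proof. by apply: Fn_inj; rewrite valFinv. Qed.

Lemma lt_linv l : lt (linv l) = Finv (lt l).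
Proof. by apply: Fn_inj; rewrite valFinv. Qed.

Lemma F_ind (P : F -> Prop) : P (Fone n) -> (forall l a, P a -> P (Fmul (lt l) a)) -> forall a, P a.
Proof.
move=> P1 PS [s Hs].
elim: s Hs => [|l s IH] Hs.
  by have -> : exist (fun w => rdb w) [::] Hs = Fone n by apply: Fn_inj.
have Hs' : rdb s by move: Hs; rewrite rdb_cons => /andP[].
have -> : exist (fun w => rdb w) (l :: s) Hs = Fmul (lt l) (exist _ s Hs').
  by apply: Fn_inj; rewrite valFmul /= red_id // rc_id.
by apply: PS; apply: IH.
Qed.

Definition Fhom (phi : F -> F) := forall a b, phi (Fmul a b) = Fmul (phi a) (phi b).

Lemma Fhom1 (phi : F -> F) : Fhom phi -> phi (Fone n) = Fone n.
Proof.
move=> H; apply: (@Fmul_injl _ (phi (Fone n))).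
by rewrite -H !Fmul1r.
Qed.

Lemma FhomV (phi : F -> F) a : Fhom phi -> phi (Finv a) = Finv (phi a).
Proof. by move=> H; apply: Finv_eq1; rewrite -H FmulVr Fhom1. Qed.

Lemma Fhom_uniq (phi psi : F -> F) : Fhom phi -> Fhom psi -> (forall i, phi (gen i) = psi (gen i)) ->
  forall a, phi a = psi a.
Proof.
move=> Hp Hq Hg; apply: F_ind; first by rewrite !Fhom1.
move=> [i b] a IH; rewrite Hp Hq IH; congr Fmul.
by case: b; rewrite ?lt_false ?FhomV // Hg.
Qed.

Lemma is_aut_hom (phi : F -> F) : is_aut phi -> Fhom phi.
Proof. by case. Qed.

Lemma is_aut_id : is_aut (@id F).
Proof. by split => //; exists id. Qed.

Lemma is_aut_comp (phi psi : F -> F) : is_aut phi -> is_aut psi -> is_aut (phi \o psi).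
Proof.
move=> [H1 B1] [H2 B2]; split; last by apply: bij_comp.
by move=> a b /=; rewrite H2 H1.
Qed.

Lemma is_aut_inv (phi : F -> F) : is_aut phi -> exists psi, [/\ is_aut psi, cancel phi psi & cancel psi phi].
Proof.
move=> [H [g c1 c2]]; exists g; split => //; split; last by exists phi.
move=> a b; apply: (can_inj c1); rewrite H !c2 //.
Qed.

Variable p : nat.
Local Notation Z := ('Z_p).
Local Open Scope ring_scope.

Lemma Zhom0 (f : F -> Z) : is_Zp_hom f -> f (Fone n) = 0 :> Z.
Proof.
move=> H; have E := H (Fone n) (Fone n); rewrite Fmul1 in E.
by apply: (addrI (f (Fone n))); rewrite -E addr0.
Qed.

Lemma ZhomV (f : F -> Z) a : is_Zp_hom f -> f (Finv a) = - f a :> Z.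
Proof. by move=> H; apply: (addrI (f a)); rewrite -H FmulVr Zhom0 // addrN. Qed.

Lemma Zhom_uniq (f g : F -> Z) : is_Zp_hom f -> is_Zp_hom g -> (forall i, f (gen i) = g (gen i)) ->
  forall a, f a = g a.
Proof.
move=> Hf Hg Hgen; apply: F_ind; first by rewrite !Zhom0.
move=> [i b] a IH; rewrite Hf Hg IH; congr (_ + _).
by case: b; rewrite ?lt_false ?ZhomV // Hgen.
Qed.

Lemma Zhom_comp (f : F -> Z) phi : is_Zp_hom f -> Fhom phi -> is_Zp_hom (f \o phi).
Proof. by move=> Hf Hp a b /=; rewrite Hp Hf. Qed.

Lemma Zhom_nz (f : F -> Z) : is_Zp_hom f -> (exists w, f w <> 0) -> exists i, f (gen i) <> 0.
Proof.
move=> Hf [w Hw]; apply: NNPP => /= Hn; apply: Hw.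
have := @Zhom_uniq f (fun _ => 0) Hf (fun a b => esym (addr0 0)).
move=> -> // i; apply: NNPP => Hi; apply: Hn; by exists i.
Qed.

End Homs.

Section Nielsen.
Variable n : nat.
Local Notation F := (Fn n).

Definition img (g : 'I_n -> F) (l : letter n) := if l.2 then g l.1 else Finv (g l.1).
Definition ext' (g : 'I_n -> F) (s : seq (letter n)) :=
  foldr (fun l acc => Fmul (img g l) acc) (Fone n) s.
Definition ext g (a : F) := ext' g (sval a).

Lemma ext'_cat g s t : ext' g (s ++ t) = Fmul (ext' g s) (ext' g t).
Proof. by elim: s => /= [|l s ->]; rewrite ?Fmul1 ?FmulA. Qed.

Lemma img_linv g l : img g (linv l) = Finv (img g l).
Proof. by case: l => i [] /=; rewrite /img /= ?FinvK. Qed.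

Lemma ext'_rc g l s : ext' g (red_cons (@linv n) l s) = Fmul (img g l) (ext' g s).
Proof.
case: s => //= l' s; case: ifP => // /eqP ->.
by rewrite img_linv FmulK.
Qed.

Lemma ext'_red g s : ext' g (reduce (@linv n) s) = ext' g s.
Proof. by elim: s => //= l s IH; rewrite ext'_rc IH. Qed.

Lemma ext_hom g : Fhom (ext g).
Proof. by move=> a b; rewrite /ext valFmul ext'_red ext'_cat. Qed.

Lemma ext_gen g i : ext g (gen i) = g i.
Proof. by rewrite /ext /= /img /= Fmul1r. Qed.

Definition tv (i j : 'I_n) (b : bool) :=
  ext (fun k => if k == i then Fmul (gen i) (if b then gen j else Finv (gen j)) else gen k).

Lemma tv_aut i j b : i != j -> is_aut (tv i j b).
Proof.
move=> Hij; split; first exact: ext_hom.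
have Hj : j == i = false by apply/negbTE; rewrite eq_sym.
have K : forall b, cancel (tv i j b) (tv i j (~~ b)).
  move=> c; apply: (@Fhom_uniq n (tv i j (~~ c) \o tv i j c) id).
  - by move=> x y /=; rewrite /tv !ext_hom.
  - by [].
  move=> k /=; rewrite /tv ext_gen; case: (eqVneq k i) => [->|Hk]; last by rewrite ext_gen (negbTE Hk).
  rewrite ext_hom ext_gen eqxx.
  case: c => /=; first by rewrite ext_gen Hj FmulKVr.
  by rewrite FhomV ?ext_gen ?Hj ?FmulKr //; apply: ext_hom.
exists (tv i j (~~ b)) => //.
by have := K (~~ b); rewrite negbK.
Qed.

Variable p : nat.
Local Notation Z := ('Z_p).
Local Open Scope ring_scope.

Lemma stepC (f : F -> Z) i j : is_Zp_hom f -> i != j -> forall c : nat,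
  exists al, is_aut al /\ forall k, f (al (gen k)) =
    if k == i then f (gen i) + c%:R * f (gen j) else f (gen k).
Proof.
move=> Hf Hij; have Hj : j == i = false by apply/negbTE; rewrite eq_sym.
elim=> [|c [al [A H]]].
  by exists id; split; [exact: is_aut_id | move=> k; rewrite mul0r addr0; case: (eqVneq k i) => [Ek|]; [subst k|]].
have Hf' : is_Zp_hom (f \o al) by apply: Zhom_comp => //; apply: is_aut_hom.
exists (al \o tv i j true); split; first by apply: is_aut_comp => //; apply: tv_aut.
move=> k /=; rewrite /tv ext_gen; case: (eqVneq k i) => [Ek|Hk]; last by rewrite H (negbTE Hk).
subst k; have := Hf' (gen i) (gen j); rewrite /= => ->.
by rewrite !H eqxx Hj -addrA -[(c.+1)%N]addn1 natrD mulrDl mul1r [_ + f (gen j)]addrC.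
Qed.

Lemma stepZ (f : F -> Z) i j : is_Zp_hom f -> i != j -> forall z : Z,
  exists al, is_aut al /\ forall k, f (al (gen k)) =
    if k == i then f (gen i) + z * f (gen j) else f (gen k).
Proof.
move=> Hf Hij z; have [al [A H]] := stepC Hf Hij (nat_of_ord z).
by exists al; split => // k; rewrite H natr_Zp.
Qed.

Lemma Zp_unit (pr : prime p) (x : Z) : x != 0 -> x \is a GRing.unit.
Proof.
move=> Hx; have p1 := prime_gt1 pr.
rewrite -(natr_Zp x) unitZpE // prime_coprime // gtnNdvd //.
  by rewrite lt0n; apply: contra Hx => /eqP H; apply/eqP; apply: val_inj.
by have := ltn_ord x; rewrite [X in (_ < X)%N -> _]Zp_cast.
Qed.

Lemma zero_out (g : F -> Z) i0 : is_Zp_hom g -> g (gen i0) = 1 -> forall m,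
  exists al, [/\ is_aut al, g (al (gen i0)) = 1 &
    forall k, k != i0 -> (k < m)%N -> g (al (gen k)) = 0].
Proof.
move=> Hg H1; elim=> [|m [al [A H0 Hk]]].
  by exists id; split => //; exact: is_aut_id.
have Hg' : is_Zp_hom (g \o al) by apply: Zhom_comp => //; apply: is_aut_hom.
case: (ltnP m n) => Hm; last first.
  exists al; split => // k Hk1 _; apply: Hk => //.
  by apply: leq_trans Hm.
set k0 := Ordinal Hm.
case: (eqVneq k0 i0) => Hk0.
  exists al; split => // k Hk1 Hkm; apply: Hk => //.
  rewrite ltn_neqAle -ltnS Hkm andbT; apply: contra Hk1 => /eqP E.
  by rewrite -Hk0; apply/eqP; apply: val_inj.
have [be [B Hb]] := stepZ Hg' Hk0 (- (g (al (gen k0)))).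
exists (al \o be); split; first by apply: is_aut_comp.
  by have := Hb i0; rewrite /= eq_sym (negbTE Hk0) => ->.
move=> k Hk1 Hkm; have := Hb k; rewrite /= => ->.
case: (eqVneq k k0) => [E|Hkk].
  by subst k; rewrite /= H0 mulr1 addrN.
apply: Hk => //.
rewrite ltn_neqAle -ltnS Hkm andbT; apply: contra Hkk => /eqP E.
by apply/eqP; apply: val_inj.
Qed.

Lemma nielsen (pr : prime p) i0 i1 (f : F -> Z) : i0 != i1 -> is_Zp_hom f ->
  (exists w, f w <> 0) -> exists al, is_aut al /\ forall k, f (al (gen k)) = (k == i0)%:R.
Proof.
move=> Hi Hf Hnz.
have [a1 [A1 H1]] : exists al, is_aut al /\ f (al (gen i0)) != 0.
  case: (eqVneq (f (gen i0)) 0) => H0; last by exists id; split => //; exact: is_aut_id.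
  have [k Hk] := Zhom_nz Hf Hnz.
  case: (eqVneq i0 k) => [E|Hki]; first by subst k.
  have [al [A H]] := stepC Hf Hki 1; exists al; split => //.
  by rewrite H eqxx H0 add0r mul1r; apply/eqP.
set f1 := f \o a1.
have Hf1 : is_Zp_hom f1 by apply: Zhom_comp => //; apply: is_aut_hom.
have Hi' : i1 != i0 by rewrite eq_sym.
have U := Zp_unit pr H1.
have [a2 [A2 H2]] := stepZ Hf1 Hi' ((1 - f1 (gen i1)) / f1 (gen i0)).
set f2 := f1 \o a2.
have Hf2 : is_Zp_hom f2 by apply: Zhom_comp => //; apply: is_aut_hom.
have E20 : f2 (gen i0) = f1 (gen i0) by rewrite /f2 /= H2 (negbTE Hi).
have E21 : f2 (gen i1) = 1 by rewrite /f2 /= H2 eqxx divrK // addrC subrK.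
have [a3 [A3 H3]] := stepZ Hf2 Hi (1 - f2 (gen i0)).
set f3 := f2 \o a3.
have Hf3 : is_Zp_hom f3 by apply: Zhom_comp => //; apply: is_aut_hom.
have E30 : f3 (gen i0) = 1 by rewrite /f3 /= H3 eqxx E21 mulr1 addrC subrK.
have [a4 [A4 H40 H4]] := zero_out Hf3 E30 n.
exists (a1 \o (a2 \o (a3 \o a4))); split.
  by do !apply: is_aut_comp => //.
move=> k; case: (eqVneq k i0) => [E|Hk].
  by subst k; exact: H40.
by apply: H4.
Qed.

End Nielsen.

Section FreePerm.
Local Open Scope group_scope.
Lemma free_perm_full (T : finType) (s : {perm T}) : prime #|T| -> s != 1 ->
  (forall j x, (s ^+ j) x = x -> s ^+ j = 1) ->
  #[s] = #|T| /\ forall x y, exists2 j, (j < #|T|)%N & y = (s ^+ j) x.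
Proof.
move=> pr s1 fr.
have orb : forall x, #|orbit 'P%act <[s]> x| = #[s].
  move=> x; have := card_orbit_stab 'P%act <[s]> x.
  suff -> : #|'C_<[s]>[x | 'P]| = 1%N by rewrite muln1.
  apply/eqP; rewrite -trivg_card1; apply/eqP/trivgP; apply/subsetP => a /setIP [Ha Hst].
  move/cycleP: Ha => [j ->] in Hst *; rewrite inE; apply/eqP; apply: fr (x) _.
  by move/astab1P: Hst.
have acts : [acts <[s]>, on [set: T] | 'P].
  by apply/actsP => a _ x; rewrite !inE.
have := acts_sum_card_orbit acts.
rewrite (eq_bigr (fun _ => #[s])); last first.
  by move=> O /imsetP [x _ ->]; apply: orb.
rewrite sum_nat_const cardsT => Hc.
have Ho : #[s] = #|T|.
  have : #[s] %| #|T| by rewrite -Hc dvdn_mull.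
  case/primeP: pr => _ H /H /orP [|/eqP //].
  by rewrite order_eq1 => H1; rewrite H1 in s1.
split => // x y.
have : y \in orbit 'P%act <[s]> x.
  have Hsub : orbit 'P%act <[s]> x \subset [set: T] by apply: subsetT.
  by move: Hsub; rewrite subEproper properEcard orb Ho cardsT ltnn andbF orbF => /eqP ->; rewrite inE.
case/orbitP => a /cyclePmin [i Hi ->] <-.
by exists i; rewrite -?Ho.
Qed.
End FreePerm.

Section HN.
Variables (n p : nat) (N : Fn n -> Prop) (t : Fn n).
Hypotheses (pr : prime p) (Hn : is_normal N) (Hi : has_index N p) (Ht : ~ N t).
Local Notation F := (Fn n).

Definition co (a b : F) := N (Fmul (Finv a) b).

Lemma N1 : N (Fone n). Proof. by case: Hn. Qed.
Lemma NM a b : N a -> N b -> N (Fmul a b). Proof. by case: Hn => _ H _ _; apply: H. Qed.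
Lemma NV a : N a -> N (Finv a). Proof. by case: Hn => _ _ H _; apply: H. Qed.
Lemma NJ g a : N a -> N (Fmul (Fmul g a) (Finv g)). Proof. by case: Hn => _ _ _ H; apply: H. Qed.
Lemma NJ' g a : N a -> N (Fmul (Fmul (Finv g) a) g).
Proof. by move=> H; have := NJ (Finv g) H; rewrite FinvK. Qed.
Lemma NVE a : N (Finv a) <-> N a.
Proof. by split => H; [rewrite -(FinvK a)|]; apply: NV. Qed.

Lemma co_refl a : co a a. Proof. by rewrite /co FmulV; apply: N1. Qed.
Lemma co_sym a b : co a b -> co b a.
Proof. by rewrite /co => H; have := NV H; rewrite Finv_mul FinvK. Qed.
Lemma co_trans a b c : co a b -> co b c -> co a c.
Proof. by rewrite /co => H1 H2; have := NM H1 H2; rewrite FmulA FmulK. Qed.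
Lemma co_mull c a b : co (Fmul c a) (Fmul c b) <-> co a b.
Proof. by rewrite /co Finv_mul FmulA FmulKV. Qed.

Let rep := proj1_sig (constructive_indefinite_description _ Hi).
Let repP := proj2_sig (constructive_indefinite_description _ Hi).

Lemma rep_inj i j : co (rep i) (rep j) -> i = j.
Proof. by case: repP => _ H _; apply: H. Qed.

Lemma rep_cover w : exists i, co w (rep i).
Proof. by case: repP => _ _ H; apply: H. Qed.

Definition cls (w : F) : 'I_p :=
  proj1_sig (constructive_indefinite_description _ (rep_cover w)).

Lemma cls_co w : co w (rep (cls w)).
Proof. rewrite /cls; case: constructive_indefinite_description => /= i; done. Qed.

Lemma cls_eq a b : cls a = cls b <-> co a b.
Proof.
split => [E|H].
  by apply: co_trans (cls_co a) _; rewrite E; apply: co_sym; apply: cls_co.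
apply: rep_inj; apply: co_trans (co_sym (cls_co a)) _.
by apply: co_trans H (cls_co b).
Qed.

Lemma cls_rep i : cls (rep i) = i.
Proof. by apply: rep_inj; apply: co_sym; apply: cls_co. Qed.

Definition sfun (i : 'I_p) := cls (Fmul t (rep i)).
Lemma sfun_inj : injective sfun.
Proof. by move=> i j /cls_eq /co_mull /rep_inj. Qed.
Definition sig := perm sfun_inj.

Lemma cls_t w : cls (Fmul t w) = sig (cls w).
Proof. by rewrite permE /sfun; apply/cls_eq/co_mull/cls_co. Qed.

Definition tpow j := iter j (Fmul t) (Fone n).
Lemma tpowS j : tpow j.+1 = Fmul t (tpow j). Proof. by []. Qed.
Lemma tpowD i j : tpow (i + j) = Fmul (tpow i) (tpow j).
Proof. by elim: i => [|i IH]; rewrite ?Fmul1 // addSn !tpowS IH FmulA. Qed.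

Lemma cls_tpow j w : cls (Fmul (tpow j) w) = (sig ^+ j)%g (cls w).
Proof.
elim: j => [|j IH]; first by rewrite Fmul1 expg0 perm1.
by rewrite tpowS FmulA cls_t IH expgSr permM.
Qed.

Lemma sig_free j x : (sig ^+ j)%g x = x -> (sig ^+ j)%g = 1%g.
Proof.
rewrite -{1 2}(cls_rep x) -cls_tpow => /cls_eq H.
have Hv : N (Finv (tpow j)).
  by have := NJ (rep x) H; rewrite /co Finv_mul -!FmulA FmulVr Fmul1 FmulKr.
apply/permP => y; rewrite perm1 -{1 2}(cls_rep y) -cls_tpow; apply/cls_eq.
by rewrite /co Finv_mul; apply: NJ'.
Qed.

Let x0 := cls (Fone n).

Lemma sig_ne1 : sig != 1%g.
Proof.
apply/eqP => E; have := cls_t (Fone n); rewrite E perm1 Fmul1r => /cls_eq.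
by rewrite /co Fmul1r => /NVE.
Qed.

Lemma sig_full : #[sig]%g = p /\ forall y, exists2 j, (j < p)%N & y = (sig ^+ j)%g x0.
Proof.
have := free_perm_full _ sig_ne1 sig_free; rewrite card_ord => /(_ pr) [H1 H2].
by split => // y; apply: H2.
Qed.

Lemma sig_uniq_le a b : (a <= b)%N -> (b < p)%N -> (sig ^+ a)%g x0 = (sig ^+ b)%g x0 -> a = b.
Proof.
move=> Hab Hb E.
have E2 : (sig ^+ (b - a))%g x0 = x0.
  apply: (@perm_inj _ (sig ^+ a)%g); rewrite E -permM -expgD subnK //.
have := sig_free E2 => /eqP; rewrite -order_dvdn (proj1 sig_full) => D.
have : (b - a < p)%N by apply: leq_ltn_trans (leq_subr _ _) Hb.
move=> Hlt; have : (b - a == 0)%N.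
  rewrite eqn0Ngt; apply/negP => Hpos.
  by have := dvdn_leq Hpos D; rewrite leqNgt Hlt.
by rewrite subn_eq0 => Hba; apply/eqP; rewrite eqn_leq Hab Hba.
Qed.

Lemma sig_uniq a b : (a < p)%N -> (b < p)%N -> (sig ^+ a)%g x0 = (sig ^+ b)%g x0 -> a = b.
Proof.
move=> Ha Hb E; case: (leqP a b) => H; first exact: sig_uniq_le.
by apply/esym; apply: sig_uniq_le => //; apply: ltnW.
Qed.

Lemma jex w : exists j, (j < p)%N /\ cls w = (sig ^+ j)%g x0.
Proof. by have [j Hj E] := (proj2 sig_full) (cls w); exists j. Qed.

Definition jf w := proj1_sig (constructive_indefinite_description _ (jex w)).
Lemma jf_spec w : (jf w < p)%N /\ cls w = (sig ^+ jf w)%g x0.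
Proof. by rewrite /jf; case: constructive_indefinite_description. Qed.
Lemma jf_eq w j : (j < p)%N -> cls w = (sig ^+ j)%g x0 -> jf w = j.
Proof. by case: (jf_spec w) => H1 H2 Hj E; apply: sig_uniq => //; rewrite -H2 -E. Qed.

Lemma cls_pow j : cls (tpow j) = (sig ^+ j)%g x0.
Proof. by have := cls_tpow j (Fone n); rewrite Fmul1r. Qed.

Lemma co_mul a b A B : co a A -> co b B -> co (Fmul a b) (Fmul A B).
Proof.
move=> H1 H2; have := NM (NJ' b H1) H2.
by rewrite /co Finv_mul !FmulA FmulK.
Qed.

Definition fN (w : F) : 'Z_p := ((jf w)%:R)%R.

Lemma fN_hom : is_Zp_hom fN.
Proof.
move=> a b; rewrite /fN.
have Ea : co a (tpow (jf a)) by apply/cls_eq; rewrite cls_pow; case: (jf_spec a).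
have Eb : co b (tpow (jf b)) by apply/cls_eq; rewrite cls_pow; case: (jf_spec b).
have E : cls (Fmul a b) = (sig ^+ ((jf a + jf b) %% p))%g x0.
  have -> : ((jf a + jf b) %% p = (jf a + jf b) %% #[sig]%g)%N by rewrite (proj1 sig_full).
  rewrite expg_mod_order -cls_pow tpowD; apply/cls_eq.
  exact: co_mul.
rewrite (jf_eq _ E) ?ltn_pmod ?prime_gt0 // Zp_nat_mod ?prime_gt1 //.
by rewrite GRing.natrD.
Qed.

Lemma fN_ker w : fN w = 0%R <-> N w.
Proof.
have Hv : nat_of_ord (fN w) = jf w.
  by rewrite /fN val_Zp_nat ?prime_gt1 // modn_small //; case: (jf_spec w).
split => [H|H].
  have J : jf w = 0%N by rewrite -Hv H.
  have : cls w = cls (Fone n) by case: (jf_spec w) => _ ->; rewrite J expg0 perm1.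
  by move/cls_eq; rewrite /co Fmul1r => /NVE.
have : cls w = (sig ^+ 0)%g x0.
  by rewrite expg0 perm1; apply/cls_eq; rewrite /co Fmul1r; apply/NVE.
by move/jf_eq => /(_ (prime_gt0 pr)); rewrite /fN => ->.
Qed.

Lemma fN_t : fN t = 1%R.
Proof.
have : cls t = (sig ^+ 1)%g x0 by rewrite expg1 -cls_t Fmul1r.
by move/jf_eq => /(_ (prime_gt1 pr)); rewrite /fN => ->.
Qed.

End HN.

Lemma HN_hom n p (N : Fn n -> Prop) t : prime p -> is_normal N -> has_index N p -> ~ N t ->
  exists f : Fn n -> 'Z_p, [/\ is_Zp_hom f, forall w, f w = 0%R <-> N w & f t = 1%R].
Proof.
move=> pr Hn Hi Ht; exists (fN pr Hn Hi Ht); split.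
- exact: fN_hom.
- exact: fN_ker.
- exact: fN_t.
Qed.

Section Paths.
Variable G : graph.
Local Notation E := (gE G).
Local Notation V := (gV G).

Lemma is_path_nil (a b : V) : is_path a b [::] = (a == b). Proof. by []. Qed.

Lemma is_path_cons (a b : V) e s : is_path a b (e :: s) = (gorg e == a) && is_path (gter e) b s.
Proof. by case: s => [|e' s] //=; rewrite -!andbA. Qed.
Arguments is_path : simpl never.

Lemma is_path_cat (a b c : V) s t : is_path a b s -> is_path b c t -> is_path a c (s ++ t).
Proof.
elim: s a => [|e s IH] a /=; first by rewrite is_path_nil => /eqP ->.
by rewrite !is_path_cons => /andP [-> H] Ht; apply: IH.
Qed.

Hypothesis invK : involutive (@ginv G).

Lemma is_path_winv (a b : V) s : is_path a b s -> is_path b a (winv (@ginv G) s).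
Proof.
elim: s a => [|e s IH] a; first by rewrite is_path_nil => /eqP ->; exact: eqxx.
rewrite is_path_cons => /andP [/eqP <- H]; rewrite winv_cons -cats1.
apply: is_path_cat (IH _ H) _.
by rewrite is_path_cons is_path_nil /gter invK !eqxx.
Qed.
End Paths.
Arguments is_path : simpl never.

Lemma is_path_map (G H : graph) (hV : gV G -> gV H) (hE : gE G -> gE H) :
  (forall e, gorg (hE e) = hV (gorg e) /\ hE (ginv e) = ginv (hE e)) ->
  forall a b s, is_path a b s -> is_path (hV a) (hV b) (map hE s).
Proof.
move=> Hm a b s; elim: s a => [|e s IH] a; first by rewrite !is_path_nil => /eqP ->.
rewrite /= !is_path_cons => /andP [/eqP <- Hs].
have [H1 H2] := Hm e; rewrite H1 eqxx /=.
have -> : gter (hE e) = hV (gter e) by rewrite /gter -H2 (proj1 (Hm _)).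
exact: IH.
Qed.

Section Equiv.
Variable n : nat.

Definition good (y : mgraph n) :=
  involutive (@ginv (mG y)) /\ forall w, reducedb (@ginv (mG y)) (mmark y w).

Lemma red_mid (E : eqType) (inv : E -> E) : involutive inv -> forall s t u,
  reduce inv (s ++ reduce inv t ++ u) = reduce inv (s ++ t ++ u).
Proof. by move=> K s t u; rewrite red_cat red_catl // -red_cat. Qed.

Lemma good_cv (x : mgraph n) : is_cv_point x -> good x.
Proof.
case=> H1 _ _ _ [H5 _ _ _]; split; first by move=> e; case: (H1 e).
by move=> w; case/andP: (H5 w).
Qed.

Lemma good_act (y : mgraph n) phi : good y -> good (cv_act y phi).
Proof. by case=> H1 H2; split => //= w; apply: H2. Qed.

Lemma equiv_act (y z : mgraph n) phi : mg_equiv y z -> mg_equiv (cv_act y phi) (cv_act z phi).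
Proof.
by case=> hV [hE [gam [B C L P M]]]; exists hV, hE, gam; split => // w; apply: M.
Qed.

Lemma good_equiv (y z : mgraph n) : good y -> mg_equiv y z -> good z.
Proof.
case=> K _ [hV [hE [gam [[_ [hE' c1 c2]] C L P M]]]]; split.
  move=> e; rewrite -(c2 e) -!(proj2 (C _)) K //.
by move=> w; rewrite M; apply: rdb_red.
Qed.

Lemma equiv_same (y : mgraph n) phi psi : good y -> (forall w, mmark y (phi w) = mmark y (psi w)) ->
  mg_equiv (cv_act y phi) (cv_act y psi).
Proof.
case=> K R H; exists id, id, [::]; split => //=.
- by split; exists id.
- by rewrite is_path_nil.
by move=> w; rewrite cats0 map_id H red_id.
Qed.

Lemma equiv_id_l (y : mgraph n) phi : good y -> (forall w, mmark y (phi w) = mmark y w) ->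
  mg_equiv (cv_act y phi) y.
Proof.
case=> K R H; exists id, id, [::]; split => //=.
- by split; exists id.
- by rewrite is_path_nil.
by move=> w; rewrite cats0 map_id H red_id.
Qed.

Lemma equiv_id_r (y : mgraph n) phi : good y -> (forall w, mmark y (phi w) = mmark y w) ->
  mg_equiv y (cv_act y phi).
Proof.
case=> K R H; exists id, id, [::]; split => //=.
- by split; exists id.
- by rewrite is_path_nil.
by move=> w; rewrite cats0 map_id H red_id.
Qed.

Lemma equiv_trans (y z w : mgraph n) : good y -> mg_equiv y z -> mg_equiv z w -> mg_equiv y w.
Proof.
move=> gy Eyz Ezw; have gz := good_equiv gy Eyz; have gw := good_equiv gz Ezw.
case: Eyz => hV [hE [gam [[B1 B2] C L P M]]].
case: Ezw => kV [kE [del [[B3 B4] C' L' P' M']]].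
have kinj : injective kE by case: B4 => g c1 _; apply: can_inj c1.
have Kw := proj1 gw.
exists (kV \o hV), (kE \o hE), (del ++ map kE gam); split.
- by split; apply: bij_comp.
- move=> e /=; have [a1 a2] := C e; have [b1 b2] := C' (hE e).
  by rewrite b1 a1 a2 (proj2 (C' _)).
- by move=> e /=; rewrite L' L.
- apply: is_path_cat P' _.
  exact: (is_path_map C').
move=> u; rewrite M' M (map_red kinj (fun e => proj2 (C' e))) red_mid //.
rewrite !map_cat (map_winv (fun e => proj2 (C' e))) winv_cat -map_comp.
by rewrite -!catA.
Qed.

Lemma equiv_sym (y z : mgraph n) : good y -> mg_equiv y z -> mg_equiv z y.
Proof.
move=> gy Eyz; have gz := good_equiv gy Eyz.
case: Eyz => hV [hE [gam [[[hV' v1 v2] [hE' e1 e2]] C L P M]]].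
have Cinv : forall e, gorg (hE' e) = hV' (gorg e) /\ hE' (ginv e) = ginv (hE' e).
  move=> e; rewrite -(e2 e); have [a1 a2] := C (hE' e).
  by rewrite e1 a1 v1 -a2 e1.
have hinj : injective hE' by apply: can_inj e2.
have Ky := proj1 gy; have Kz := proj1 gz.
exists hV', hE', (map hE' (winv (@ginv (mG z)) gam)); split.
- by split; [exists hV | exists hE].
- exact: Cinv.
- by move=> e; rewrite -{2}(e2 e) L.
- rewrite -{1}(v1 (mbase y)); apply: (is_path_map Cinv).
  exact: is_path_winv.
move=> w; rewrite M (map_red hinj (fun e => proj2 (Cinv e))) red_mid //.
rewrite !map_cat -map_comp (eq_map (e1 : hE' \o hE =1 id)) map_id.
rewrite (map_winv (fun e => proj2 (Cinv e))).
set G0 := map hE' gam.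
rewrite winvK // -!catA red_winvK // red_cat.
have -> : reduce (@ginv (mG y)) (winv (@ginv (mG y)) G0 ++ G0) = reduce (@ginv (mG y)) [::].
  by have := red_winvK Ky G0 [::]; rewrite cats0.
by rewrite -red_cat cats0 red_id //; apply: (proj2 gy).
Qed.

End Equiv.

Definition asb (P : Prop) : bool := if excluded_middle_informative P then true else false.
Lemma asbP (P : Prop) : reflect P (asb P).
Proof. by rewrite /asb; case: excluded_middle_informative => H; constructor. Qed.

Lemma FC (X : Type) (T : finType) (S : X -> Prop) (r : X -> X -> Prop) (F : X -> T) :
  (forall x, S x -> r x x) ->
  (forall x y, S x -> S y -> r x y -> r y x) ->
  (forall x y z, S x -> S y -> S z -> r x y -> r y z -> r x z) ->
  (forall x y, S x -> S y -> F x = F y -> x = y) ->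
  exists k, num_classes S r k.
Proof.
move=> Rr Rs Rt Fi.
pose P t := exists x, [/\ S x, F x = t & forall y, S y -> r y x -> (enum_rank t <= enum_rank (F y))%N].
pose B := [set t | asb (P t)].
have HP : forall i : 'I_#|B|, P (enum_val i).
  by move=> i; have := enum_valP i; rewrite inE => /asbP.
pose rep i := proj1_sig (constructive_indefinite_description _ (HP i)).
have repP : forall i, [/\ S (rep i), F (rep i) = enum_val i &
    forall y, S y -> r y (rep i) -> (enum_rank (enum_val i) <= enum_rank (F y))%N].
  by move=> i; rewrite /rep; case: constructive_indefinite_description.
exists #|B|, rep; split.
- by move=> i; case: (repP i).
- move=> i j Hij; case: (repP i) => Si Fi' Mi; case: (repP j) => Sj Fj Mj.
  have L1 := Mj _ Si Hij; have L2 := Mi _ Sj (Rs _ _ Si Sj Hij).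
  rewrite Fi' in L1; rewrite Fj in L2.
  have : enum_rank (enum_val i) = enum_rank (enum_val j) by apply/val_inj/eqP; rewrite eqn_leq L1 L2.
  by move/enum_rank_inj/enum_val_inj.
move=> y Sy.
pose Cl t := asb (exists z, [/\ S z, r y z & F z = t]).
have Cy : Cl (F y) by apply/asbP; exists y; split => //; apply: Rr.
case: (arg_minnP (fun t => enum_rank t) Cy) => ts /asbP [z [Sz Ryz Fz]] Hmin.
have Bts : ts \in B.
  rewrite inE; apply/asbP; exists z; split => // y' Sy' Ry'.
  apply: Hmin; apply/asbP; exists y'; split => //.
  exact: Rt Ryz (Rs _ _ Sy' Sz Ry').
exists (enum_rank_in Bts ts).
case: (repP (enum_rank_in Bts ts)) => S1 F1 _.
rewrite enum_rankK_in // in F1.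
by rewrite (Fi _ _ S1 Sz (etrans F1 (esym Fz))).
Qed.

Lemma TL (X Y : Type) (S : X -> Prop) (r : X -> X -> Prop) (S' : Y -> Prop) (r' : Y -> Y -> Prop)
  (F : X -> Y) k :
  num_classes S r k ->
  (forall x, S x -> S' (F x)) ->
  (forall x y, S x -> S y -> r' (F x) (F y) -> r x y) ->
  (forall y, S' y -> exists x, S x /\ r' y (F x)) ->
  (forall x y, S x -> S y -> r x y -> r' (F x) (F y)) ->
  (forall x y z, S' x -> S' y -> S' z -> r' x y -> r' y z -> r' x z) ->
  num_classes S' r' k.
Proof.
move=> [rep [H1 H2 H3]] Fi Fii Fiii Fiv Rt.
exists (F \o rep); split.
- by move=> i; apply: Fi.
- by move=> i j /Fii H; apply: H2; apply: H.
move=> y Sy; have [x [Sx Hx]] := Fiii y Sy.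
have [i Hi] := H3 x Sx; exists i.
by apply: Rt Hx (Fiv _ _ Sx (H1 i) Hi) => //; apply: Fi.
Qed.

Section Main.
Variables (n p : nat) (x : mgraph n) (N : Fn n -> Prop).
Hypotheses (n2 : (2 <= n)%N) (pr : prime p) (cvx : is_cv_point x)
  (nN : is_normal N) (iN : has_index N p).
Local Notation F := (Fn n).
Local Notation Z := ('Z_p).
Local Open Scope ring_scope.

Let gx : good x := good_cv cvx.
Let p1 : (1 < p)%N := prime_gt1 pr.

Lemma Zsub (f : F -> Z) a b : is_Zp_hom f -> f (Fmul (Finv a) b) = f b - f a.
Proof. by move=> H; rewrite H ZhomV // addrC. Qed.

Definition Fpow (a : F) k := iter k (Fmul a) (Fone n).
Lemma Zpow (f : F -> Z) a k : is_Zp_hom f -> f (Fpow a k) = k%:R * f a.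
Proof.
move=> H; elim: k => [|k IH]; first by rewrite mul0r /= Zhom0.
by rewrite /= H -/(Fpow a k) IH -[(k.+1)%N]addn1 natrD mulrDl mul1r addrC.
Qed.

Lemma Zone_neq0 : (1 : Z) != 0.
Proof. exact: oner_neq0. Qed.

Lemma Zsurj (f : F -> Z) a : is_Zp_hom f -> f a != 0 -> forall z, f (Fpow a (nat_of_ord (z / f a))) = z.
Proof.
move=> H Ha z; rewrite Zpow // natr_Zp divrK //.
exact: Zp_unit.
Qed.

Lemma stab_id : in_stab x id.
Proof. by split; [exact: is_aut_id | apply: equiv_id_l]. Qed.

Lemma stab_comp phi psi : in_stab x phi -> in_stab x psi -> in_stab x (phi \o psi).
Proof.
move=> [A1 E1] [A2 E2]; split; first exact: is_aut_comp.
apply: (equiv_trans (z := cv_act x psi)); first by do 2 apply: good_act.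
  exact: (equiv_act psi E1).
exact: E2.
Qed.

Lemma stab_inv phi psi : in_stab x phi -> is_aut psi -> cancel psi phi -> in_stab x psi.
Proof.
move=> [A1 E1] A2 c; split => //.
apply: equiv_sym; first exact: gx.
apply: (equiv_trans (z := cv_act x (phi \o psi))) => //.
  by apply: equiv_id_r => // w /=; rewrite c.
exact: (equiv_act psi E1).
Qed.

Lemma t0_ex : exists t0, ~ N t0.
Proof.
case: iN => rep [_ H2 _].
pose i0 : 'I_p := Ordinal (ltnW p1); pose i1 : 'I_p := Ordinal p1.
exists (Fmul (Finv (rep i0)) (rep i1)) => /(H2 _ _) E.
by have := congr1 val E.
Qed.

Lemma f0_ex : exists f0 : F -> Z, [/\ is_Zp_hom f0, forall w, f0 w = 0 <-> N w &
  exists t0, f0 t0 = 1].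
Proof.
have [t0 Ht0] := t0_ex; have [f [H1 H2 H3]] := HN_hom pr nN iN Ht0.
by exists f; split => //; exists t0.
Qed.

Let f0 := proj1_sig (constructive_indefinite_description _ f0_ex).
Let f0P : [/\ is_Zp_hom f0, forall w, f0 w = 0 <-> N w & exists t0, f0 t0 = 1] :=
  proj2_sig (constructive_indefinite_description _ f0_ex).
Let f0hom : is_Zp_hom f0. Proof. by case: f0P. Qed.
Let f0ker w : f0 w = 0 <-> N w. Proof. by case: f0P. Qed.

Lemma in_A_iff a : in_A N a <-> is_aut a /\ forall w, f0 (a w) = f0 w.
Proof.
split => [[Aa H]|[Aa H]]; split => //.
  move=> w; have := H w w; rewrite -!f0ker !Zsub // subrr => [[_ /(_ erefl)]].
  by move/eqP; rewrite subr_eq0 => /eqP.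
by move=> t w; rewrite -!f0ker !Zsub // H.
Qed.

Definition Sc (f : F -> Z) := is_Zp_hom f /\ exists w, f w <> 0.
Definition rc (f g : F -> Z) := exists phi, in_stab x phi /\ forall w, g w = f (phi w).

Let i0 : 'I_n := Ordinal (ltnW n2).
Let i1 : 'I_n := Ordinal n2.
Let i01 : i0 != i1. Proof. by []. Qed.

Lemma f0_nz : exists w, f0 w <> 0.
Proof. by case: f0P => _ _ [t Ht]; exists t; rewrite Ht; apply/eqP; exact: Zone_neq0. Qed.

Lemma trans_f0 f : Sc f -> exists chi, is_aut chi /\ forall w, f (chi w) = f0 w.
Proof.
case=> Hf Hnz.
have [al [A1 H1]] := nielsen pr i01 Hf Hnz.
have [be [B1 H2]] := nielsen pr i01 f0hom f0_nz.
have [be' [B2 c1 c2]] := is_aut_inv B1.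
have E : forall w, (f \o al) w = (f0 \o be) w.
  apply: Zhom_uniq; try (apply: Zhom_comp => //; apply: is_aut_hom => //).
  by move=> i /=; rewrite H1 H2.
exists (al \o be'); split; first exact: is_aut_comp.
by move=> w; have := E (be' w); rewrite /= c2.
Qed.

Lemma chi_ex f : exists chi, Sc f -> is_aut chi /\ forall w, f (chi w) = f0 w.
Proof.
case: (classic (Sc f)) => H; last by exists id.
by have [chi Hc] := trans_f0 H; exists chi.
Qed.

Definition chi f := proj1_sig (constructive_indefinite_description _ (chi_ex f)).
Lemma chiP f : Sc f -> is_aut (chi f) /\ forall w, f (chi f w) = f0 w.
Proof. by rewrite /chi; case: constructive_indefinite_description. Qed.


Lemma c_classes : exists k, num_classes Sc rc k.
Proof.
apply: (@FC _ _ Sc rc (fun f : F -> Z => [ffun i => f (gen i)])).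
- by move=> f _; exists id; split => //; exact: stab_id.
- move=> f g _ _ [phi [Hs E]].
  have [psi [Ap c1 c2]] := is_aut_inv (proj1 Hs).
  by exists psi; split; [apply: stab_inv Hs Ap c2 | move=> w; rewrite -{1}(c2 w) E].
- move=> f g h _ _ _ [phi [H1 E1]] [psi [H2 E2]].
  by exists (phi \o psi); split; [apply: stab_comp | move=> w; rewrite E2 E1].
move=> f g [Hf _] [Hg _] E; apply: functional_extensionality.
apply: Zhom_uniq => // i.
by have := congr1 (fun h : {ffun 'I_n -> Z} => h i) E; rewrite !ffunE.
Qed.

Lemma ker_normal (f : F -> Z) : is_Zp_hom f -> is_normal (fun w => f w = 0).
Proof.
move=> H; split.
- exact: Zhom0.
- by move=> a b Ha Hb; rewrite H Ha Hb addr0.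
- by move=> a Ha; rewrite ZhomV // Ha oppr0.
by move=> g a Ha; rewrite !H Ha addr0 ZhomV // addrN.
Qed.

Lemma nz_elt (f : F -> Z) : Sc f -> exists a, f a != 0.
Proof. by case=> _ [a Ha]; exists a; apply/eqP. Qed.

Lemma ltp (z : Z) : (nat_of_ord z < p)%N.
Proof. by have := ltn_ord z; rewrite [X in (_ < X)%N -> _]Zp_cast. Qed.

Lemma ker_index (f : F -> Z) : Sc f -> has_index (fun w => f w = 0) p.
Proof.
move=> Sf; have [a Ha] := nz_elt Sf; have Hf := proj1 Sf.
pose rep (i : 'I_p) := Fpow a (nat_of_ord ((nat_of_ord i)%:R / f a)).
have Hr : forall i, f (rep i) = (nat_of_ord i)%:R by move=> i; apply: Zsurj.
exists rep; split => //.
- move=> i j; rewrite Zsub // !Hr => /eqP; rewrite subr_eq0 => /eqP E.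
  have := congr1 (@nat_of_ord _) E; rewrite !val_Zp_nat // !modn_small // => E'.
  by apply/val_inj.
move=> y _; exists (Ordinal (ltp (f y))).
by rewrite Zsub // Hr /= natr_Zp subrr.
Qed.

Lemma one_coset (f : F -> Z) : Sc f ->
  is_coset (fun w => f w = 0) (fun w => f w = 1) /\ ~ (forall w, f w = 1 <-> f w = 0).
Proof.
move=> Sf; have [a Ha] := nz_elt Sf; have Hf := proj1 Sf.
pose t := Fpow a (nat_of_ord (1 / f a)).
have Ht : f t = 1 by apply: Zsurj.
split.
  exists t => w; rewrite Zsub // Ht; split; first by move=> ->; rewrite subrr.
  by move/eqP; rewrite subr_eq0 => /eqP.
move=> /(_ t) [H _]; have := H Ht; rewrite Ht => /eqP.
by rewrite (negbTE Zone_neq0).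
Qed.

Lemma hom_eq_k1 (h1 h2 : F -> Z) : is_Zp_hom h1 -> is_Zp_hom h2 -> (exists w, h1 w <> 0) ->
  (forall w, h1 w = 0 <-> h2 w = 0) -> (forall w, h1 w = 1 <-> h2 w = 1) -> forall w, h1 w = h2 w.
Proof.
move=> H1 H2 Hnz K0 K1 w.
have [a Ha] := nz_elt (conj H1 Hnz).
pose t := Fpow a (nat_of_ord (1 / h1 a)).
have Ht : h1 t = 1 by apply: Zsurj.
have Ht2 : h2 t = 1 by apply/K1.
pose u := Fmul (Finv (Fpow t (nat_of_ord (h1 w)))) w.
have : h1 u = 0 by rewrite /u Zsub // Zpow // Ht mulr1 natr_Zp subrr.
move/K0; rewrite /u Zsub // Zpow // Ht2 mulr1 natr_Zp => /eqP; rewrite subr_eq0 => /eqP.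
by [].
Qed.

Definition Sa (y : mgraph n) := exists phi, is_aut phi /\ mg_equiv (cv_act x phi) y.
Definition ra (y z : mgraph n) := exists phi, in_A N phi /\ mg_equiv (cv_act y phi) z.

Lemma good_Sa y : Sa y -> good y.
Proof. by case=> phi [_ E]; apply: good_equiv E; apply: good_act. Qed.

Lemma a_i f : Sc f -> Sa (cv_act x (chi f)).
Proof. by move=> Sf; exists (chi f); split; [case: (chiP Sf) | apply: equiv_same]. Qed.

Lemma a_ii f g : Sc f -> Sc g -> ra (cv_act x (chi f)) (cv_act x (chi g)) -> rc f g.
Proof.
move=> Sf Sg [a [HA E]].
have [Af Ef] := chiP Sf; have [Ag Eg] := chiP Sg.
have [g' [Ag' c1 c2]] := is_aut_inv Ag.
have [Aa Ea] := (in_A_iff a).1 HA.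
exists (chi f \o (a \o g')); split.
  split; first by do 2 apply: is_aut_comp => //.
  apply: (equiv_trans (z := cv_act (cv_act x (chi g)) g')).
  - by do 3 apply: good_act.
  - exact: (equiv_act g' E).
  by apply: (equiv_id_l (y := x) (phi := chi g \o g')) => // w /=; rewrite c2.
by move=> w /=; rewrite Ef Ea -Eg c2.
Qed.

Lemma a_iii y : Sa y -> exists f, Sc f /\ ra y (cv_act x (chi f)).
Proof.
move=> Sy; have gy := good_Sa Sy; case: Sy => psi [Apsi E].
have [psi' [Apsi' c1 c2]] := is_aut_inv Apsi.
pose f := f0 \o psi'.
have Sf : Sc f.
  split; first by apply: Zhom_comp => //; apply: is_aut_hom.
  by have [w Hw] := f0_nz; exists (psi w); rewrite /f /= c1.
exists f; split => //.
have [Ac Ec] := chiP Sf.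
exists (psi' \o chi f); split.
  by apply/in_A_iff; split; [apply: is_aut_comp | move=> w; apply: Ec].
have E1 := equiv_act (psi' \o chi f) E.
have E2 := equiv_sym (good_act _ (good_act _ gx)) E1.
apply: (equiv_trans _ E2); first exact: good_act.
by apply: (equiv_same (y := x) (phi := psi \o (psi' \o chi f))) => // w /=; rewrite c2.
Qed.

Lemma a_iv f g : Sc f -> Sc g -> rc f g -> ra (cv_act x (chi f)) (cv_act x (chi g)).
Proof.
move=> Sf Sg [s [Hs E]].
have [Af Ef] := chiP Sf; have [Ag Eg] := chiP Sg.
have [f' [Af' c1 c2]] := is_aut_inv Af.
exists (f' \o (s \o chi g)); split.
  apply/in_A_iff; split; first by do 2 apply: is_aut_comp => //; case: Hs.
  by move=> w /=; rewrite -Ef c2 -E Eg.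
have E1 : mg_equiv (cv_act x (chi f \o (f' \o (s \o chi g)))) (cv_act x (s \o chi g)).
  by apply: equiv_same => // w /=; rewrite c2.
apply: (equiv_trans _ E1); first by do 2 apply: good_act.
exact: (equiv_act (chi g) (proj2 Hs)).
Qed.

Lemma a_v y z w : Sa y -> Sa z -> Sa w -> ra y z -> ra z w -> ra y w.
Proof.
move=> Sy _ _ [a1 [H1 E1]] [a2 [H2 E2]].
exists (a1 \o a2); split.
  split; first by apply: is_aut_comp; [case: H1 | case: H2].
  by move=> t u /=; apply: iff_trans ((proj2 H1) t (a2 u)) ((proj2 H2) t u).
apply: (equiv_trans _ (equiv_act a2 E1) E2).
by do 2 apply: good_act; apply: good_Sa.
Qed.

Lemma main_res : exists k : nat,
    [/\ num_classes
          (fun y : mgraph n => exists phi, is_aut phi /\ mg_equiv (cv_act x phi) y)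
          (fun y z => exists phi, in_A N phi /\ mg_equiv (cv_act y phi) z) k,
        num_classes
          (fun P : (Fn n -> Prop) * (Fn n -> Prop) =>
             [/\ is_normal P.1, has_index P.1 p, is_coset P.1 P.2 &
                 ~ (forall w, P.2 w <-> P.1 w)])
          (fun P Q => exists phi, in_stab x phi /\
             (forall w, Q.1 w <-> P.1 (phi w)) /\
             (forall w, Q.2 w <-> P.2 (phi w))) k &
        num_classes
          (fun f : Fn n -> 'Z_p => is_Zp_hom f /\ exists w, f w <> 0%R)
          (fun f g => exists phi, in_stab x phi /\ forall w, g w = f (phi w)) k].
Proof.
have [k Hc] := c_classes; exists k; split => //.
- apply: (TL Hc (F := fun f => cv_act x (chi f))).
  + exact: a_i.
  + exact: a_ii.
  + exact: a_iii.
  + exact: a_iv.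
  + exact: a_v.
apply: (TL Hc (F := fun f : F -> Z => (fun w => f w = 0, fun w => f w = 1))).
- move=> f Sf; have [H1 H2] := one_coset Sf; split => //=.
  + exact: (ker_normal (proj1 Sf)).
  + exact: ker_index.
- move=> f g Sf Sg [phi [Hs [E1 E2]]]; exists phi; split => // w.
  have Hfp : is_Zp_hom (f \o phi).
    by apply: Zhom_comp; [case: Sf | apply: is_aut_hom; case: Hs].
  exact: (@hom_eq_k1 g (f \o phi) (proj1 Sg) Hfp (proj2 Sg) E1 E2 w).
- move=> [K C] [/= Hn Hi [t Ht] Hne].
  have Hnt : ~ K t.
    move=> Kt; apply: Hne => w; rewrite Ht; case: Hn => _ HM HV _; split => H.
      by have := HM _ _ Kt H; rewrite FmulK.
    by apply: HM => //; apply: HV.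
  have [f [Hf Hk Hft]] := HN_hom pr Hn Hi Hnt.
  exists f; split.
    by split => //; exists t; rewrite Hft; apply/eqP; exact: Zone_neq0.
  exists id; split; first exact: stab_id.
  split => w /=; first by apply: Hk.
  rewrite Ht -Hk Zsub // Hft; split; [by move=> ->; rewrite subrr | by move/eqP; rewrite subr_eq0 => /eqP].
- move=> f g Sf Sg [phi [Hs E]]; exists phi; split => //.
  by split => w /=; rewrite E.
move=> P Q R _ _ _ [p1' [H1 [A1 B1]]] [p2 [H2 [A2 B2]]].
exists (p1' \o p2); split; first exact: stab_comp.
by split => w; [apply: iff_trans (A2 w) (A1 _) | apply: iff_trans (B2 w) (B1 _)].
Qed.

End Main.

Theorem lemma6p6 (n p : nat) (x : mgraph n) (N : Fn n -> Prop) :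
  2 <= n -> prime p -> is_cv_point x ->
  is_normal N -> has_index N p ->
  exists k : nat,
    [/\ (* (a) A-orbits of points in the Out(F_n)-orbit of x *)
        num_classes
          (fun y : mgraph n => exists phi, is_aut phi /\ mg_equiv (cv_act x phi) y)
          (fun y z => exists phi, in_A N phi /\ mg_equiv (cv_act y phi) z) k,
        (* (b) Out(F_n)_x-orbits of pairs (N', tN'), tN' <> N' *)
        num_classes
          (fun P : (Fn n -> Prop) * (Fn n -> Prop) =>
             [/\ is_normal P.1, has_index P.1 p, is_coset P.1 P.2 &
                 ~ (forall w, P.2 w <-> P.1 w)])
          (fun P Q => exists phi, in_stab x phi /\
             (forall w, Q.1 w <-> P.1 (phi w)) /\
             (forall w, Q.2 w <-> P.2 (phi w))) k &
        (* (c) Out(F_n)_x-orbits of non-trivial homs F_n -> Z/p *)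
        num_classes
          (fun f : Fn n -> 'Z_p => is_Zp_hom f /\ exists w, f w <> 0%R)
          (fun f g => exists phi, in_stab x phi /\ forall w, g w = f (phi w)) k].
Proof.
move=> n2 pr cvx nN iN; exact: main_res.
Qed.
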